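(* Let $\theta\in\mathbb{R}$ with $\tan\theta\in\mathbb{R}\setminus\mathbb{Q}$, let $\epsilon>0$, and let $\Lambda=\Lambda_F\times\mathbb{Z}\subset\mathbb{R}^2$ be as defined in the context. Let $w=(1,s)\in\mathbb{R}^2$ with $s\neq 0$, and put $\Lambda+w\mathbb{R}=\{p+tw:\ p\in\Lambda,\ t\in\mathbb{R}\}$. (i) If $s\in\mathbb{Q}\cos\theta+\mathbb{Q}\sin\theta$, then either $\Lambda+w\mathbb{R}$ is a dense subset of $\mathbb{R}^2$, or each connected component of the closure of $\Lambda+w\mathbb{R}$ is homeomorphic to $[0,1]\times\mathbb{R}$. (ii) If $s\notin\mathbb{Q}\cos\theta+\mathbb{Q}\sin\theta$, then $\Lambda+w\mathbb{R}$ is a dense subset of $\mathbb{R}^2$.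
   Context: Fix $\theta$ with $\tan\theta$ irrational and a window length $\epsilon>0$. Define $\Lambda_F=\{m\cos\theta-n\sin\theta:\ m,n\in\mathbb{Z},\ 0\le m\sin\theta+n\cos\theta<\epsilon\}\subset\mathbb{R}$ and $\Lambda=\Lambda_F\times\mathbb{Z}\subset\mathbb{R}^2$. Equivalently, $\Lambda$ is the cut-and-project set obtained from the lattice $D=\{(m\cos\theta-n\sin\theta,\ k,\ m\sin\theta+n\cos\theta):\ m,n,k\in\mathbb{Z}\}\subset\mathbb{R}^2\times\mathbb{R}$ and window $[0,\epsilon)$: $\Lambda$ consists of the projections to $\mathbb{R}^2$ of lattice points whose last coordinate lies in $[0,\epsilon)$. *)

(* Defs.v *)
From Stdlib Require Import Reals QArith Qreals ZArith.
Open Scope R_scope.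

Definition pt := (R * R)%type.

Definition dist2 (p q : pt) : R :=
  sqrt ((fst p - fst q) ^ 2 + (snd p - snd q) ^ 2).

Definition open2 (U : pt -> Prop) : Prop :=
  forall x, U x -> exists d, 0 < d /\ forall y, dist2 x y < d -> U y.

Definition closure2 (A : pt -> Prop) (x : pt) : Prop :=
  forall e, 0 < e -> exists y, A y /\ dist2 x y < e.

Definition dense2 (A : pt -> Prop) : Prop := forall x, closure2 A x.

Definition connected2 (A : pt -> Prop) : Prop :=
  forall U V, open2 U -> open2 V ->
    (forall x, A x -> U x \/ V x) ->
    (forall x, ~ (A x /\ U x /\ V x)) ->
    (forall x, A x -> U x) \/ (forall x, A x -> V x).

Definition component2 (C : pt -> Prop) (x : pt) : pt -> Prop :=
  fun y => exists K, connected2 K /\ (forall z, K z -> C z) /\ K x /\ K y.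

Definition cont_on (A : pt -> Prop) (f : pt -> pt) : Prop :=
  forall p, A p -> forall e, 0 < e -> exists d, 0 < d /\
    forall q, A q -> dist2 p q < d -> dist2 (f p) (f q) < e.

Definition homeomorphic2 (A B : pt -> Prop) : Prop :=
  exists f g : pt -> pt,
    (forall p, A p -> B (f p)) /\ (forall q, B q -> A (g q)) /\
    (forall p, A p -> g (f p) = p) /\ (forall q, B q -> f (g q) = q) /\
    cont_on A f /\ cont_on B g.

Definition strip : pt -> Prop := fun p => 0 <= fst p <= 1.

Definition Lambda (theta eps : R) (p : pt) : Prop :=
  exists m n k : Z,
    0 <= IZR m * sin theta + IZR n * cos theta < eps /\
    p = (IZR m * cos theta - IZR n * sin theta, IZR k).

Definition LambdaLine (theta eps s : R) (p : pt) : Prop :=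
  exists q t, Lambda theta eps q /\ p = (fst q + t, snd q + t * s).

Definition in_Qspan (theta s : R) : Prop :=
  exists a b : Q, s = Q2R a * cos theta + Q2R b * sin theta.

(* Main.v *)
Require Import Defs.
From Stdlib Require Import Reals QArith Qreals ZArith Lra Lia Classical ClassicalEpsilon.
Open Scope R_scope.

Lemma ip_spec (x : R) : IZR (Int_part x) <= x < IZR (Int_part x) + 1.
Proof. destruct (base_Int_part x). lra. Qed.

Section K1.
Variables a b : R.
Hypothesis Hind : forall p q : Z, IZR p * a + IZR q * b = 0 -> p = 0%Z /\ q = 0%Z.

Definition Grp x := exists p q : Z, x = IZR p * a + IZR q * b.

Lemma Grp_sub x y : Grp x -> Grp y -> Grp (x - y).
Proof. intros [p [q ->]] [p' [q' ->]]. exists (p - p')%Z, (q - q')%Z.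
 rewrite !minus_IZR. ring. Qed.

Lemma Grp_mul x z : Grp x -> Grp (IZR z * x).
Proof. intros [p [q ->]]. exists (z * p)%Z, (z * q)%Z. rewrite !mult_IZR. ring. Qed.

Lemma a_nz : a <> 0.
Proof. intro H. destruct (Hind 1 0) as [H1 _]. rewrite H. ring. discriminate. Qed.

Lemma Grp_a : Grp a. Proof. exists 1%Z, 0%Z. simpl. ring. Qed.
Lemma Grp_b : Grp b. Proof. exists 0%Z, 1%Z. simpl. ring. Qed.

Lemma small_elt : forall e, 0 < e -> exists x, Grp x /\ 0 < x < e.
Proof.
  intros e He. apply NNPP. intro H.
  assert (He' : forall x, Grp x -> 0 < x -> e <= x).
  { intros x Gx Px. destruct (Rlt_le_dec x e) as [h|h]; auto.
    exfalso; apply H; exists x; auto. }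
  set (E := fun y => exists x, Grp x /\ 0 < x /\ y = - x).
  assert (Hb : bound E). { exists 0. intros y [x [_ [Px ->]]]. lra. }
  assert (Hne : exists y, E y).
  { exists (- Rabs a). exists (Rabs a). repeat split.
    - unfold Rabs; destruct (Rcase_abs a).
      + replace (- a) with (IZR (-1) * a) by (simpl; ring). apply Grp_mul, Grp_a.
      + apply Grp_a.
    - apply Rabs_pos_lt, a_nz. }
  destruct (completeness E Hb Hne) as [m [Hub Hlub]].
  set (mu := - m).
  assert (lb : forall x, Grp x -> 0 < x -> mu <= x).
  { intros x Gx Px. assert (E (-x)) by (exists x; auto). apply Hub in H0. unfold mu; lra. }
  assert (glb : forall t, (forall x, Grp x -> 0 < x -> t <= x) -> t <= mu).
  { intros t Ht. assert (m <= - t). { apply Hlub. intros y [x [Gx [Px ->]]]. specialize (Ht x Gx Px). lra. }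
    unfold mu; lra. }
  assert (Hmu : e <= mu) by (apply glb; auto).
  assert (approx : forall d, 0 < d -> exists x, Grp x /\ 0 < x /\ x < mu + d).
  { intros d Hd. apply NNPP; intro H1.
    assert (mu + d <= mu). { apply glb. intros x Gx Px. destruct (Rlt_le_dec x (mu + d)) as [h|h]; auto.
      exfalso; apply H1; exists x; auto. }
    lra. }
  destruct (approx (mu/2)) as [x1 [G1 [P1 L1]]]. lra.
  assert (mu <= x1) by auto.
  destruct (Rle_lt_or_eq_dec _ _ H0) as [Hlt|Heq].
  - destruct (approx (x1 - mu)) as [x2 [G2 [P2 L2]]]. lra.
    assert (mu <= x2) by auto.
    assert (mu <= x1 - x2). { apply lb. apply Grp_sub; auto. lra. }
    lra.
  - assert (Gmu : Grp mu) by (rewrite Heq; auto).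
    assert (Hdiv : forall g, Grp g -> g = IZR (Int_part (g / mu)) * mu).
    { intros g Gg. set (t := Int_part (g / mu)).
      destruct (ip_spec (g / mu)) as [h1 h2]. fold t in h1, h2.
      assert (h1' : IZR t * mu <= g).
      { apply Rmult_le_compat_r with (r := mu) in h1; [|lra].
        replace (g / mu * mu) with g in h1 by (field; lra). lra. }
      assert (h2' : g < IZR t * mu + mu).
      { apply Rmult_lt_compat_r with (r := mu) in h2; [|lra].
        replace (g / mu * mu) with g in h2 by (field; lra). lra. }
      destruct (Rle_lt_or_eq_dec _ _ h1') as [h|h]; [|lra].
      exfalso. assert (mu <= g - IZR t * mu). { apply lb. apply Grp_sub; auto. apply Grp_mul; auto. lra. }
      lra. }
    pose proof (Hdiv a Grp_a) as Ha. pose proof (Hdiv b Grp_b) as Hb'.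
    set (t1 := Int_part (a / mu)) in *. set (t2 := Int_part (b / mu)) in *.
    destruct (Hind t2 (- t1)%Z) as [e1 e2].
    { rewrite opp_IZR. rewrite Ha at 1. rewrite Hb' at 1. ring. }
    apply a_nz. rewrite Ha. assert (t1 = 0%Z) by lia. rewrite H1. simpl. ring.
Qed.

Lemma K1_dense : forall r e, 0 < e -> exists p q : Z, Rabs (IZR p * a + IZR q * b - r) < e.
Proof.
  intros r e He. destruct (small_elt e He) as [x [[p [q Hx]] [Px Lx]]].
  set (t := Int_part (r / x)). destruct (ip_spec (r / x)) as [h1 h2]. fold t in h1, h2.
  assert (h1' : IZR t * x <= r).
  { apply Rmult_le_compat_r with (r := x) in h1; [|lra].
    replace (r / x * x) with r in h1 by (field; lra). lra. }
  assert (h2' : r < IZR t * x + x).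
  { apply Rmult_lt_compat_r with (r := x) in h2; [|lra].
    replace (r / x * x) with r in h2 by (field; lra). lra. }
  exists (t * p)%Z, (t * q)%Z. rewrite !mult_IZR.
  replace (IZR t * IZR p * a + IZR t * IZR q * b) with (IZR t * x) by (rewrite Hx; ring).
  apply Rabs_def1; lra.
Qed.
End K1.

Lemma php : forall M (f : nat -> nat), (forall i, (i <= M)%nat -> (f i < M)%nat) ->
  exists i j, (i < j)%nat /\ (j <= M)%nat /\ f i = f j.
Proof.
  induction M as [|M IH]; intros f Hf.
  - specialize (Hf 0%nat (le_n 0)). lia.
  - destruct (classic (exists i, (i <= M)%nat /\ f i = f (S M))) as [[i [Hi Hfi]]|Hno].
    + exists i, (S M). repeat split; auto; lia.
    + set (f' := fun i => if Nat.eqb (f i) M then f (S M) else f i).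
      assert (Hno' : forall i, (i <= M)%nat -> f i <> f (S M)).
      { intros i Hi E. apply Hno. exists i. auto. }
      destruct (IH f') as [i [j [Hij [HjM Heq]]]].
      { intros i Hi. unfold f'. destruct (Nat.eqb_spec (f i) M) as [E|E].
        - pose proof (Hf (S M) (le_n _)). pose proof (Hno' i Hi). lia.
        - pose proof (Hf i ltac:(lia)). lia. }
      exists i, j. repeat split; try lia.
      unfold f' in Heq.
      pose proof (Hno' i ltac:(lia)). pose proof (Hno' j ltac:(lia)).
      destruct (Nat.eqb_spec (f i) M); destruct (Nat.eqb_spec (f j) M); try lia.
Qed.

Definition fpart (x : R) := x - IZR (Int_part x).

Lemma fpart_spec x : 0 <= fpart x < 1.
Proof. unfold fpart. destruct (ip_spec x). lra. Qed.

Lemma box_bound (N : Z) x : (0 < N)%Z -> 0 <= x < 1 ->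
  (0 <= Int_part (IZR N * x) < N)%Z.
Proof.
  intros HN Hx. destruct (ip_spec (IZR N * x)) as [h1 h2].
  assert (HN' : 0 < IZR N) by (apply IZR_lt; auto).
  assert (0 <= IZR N * x) by (apply Rmult_le_pos; lra).
  assert (IZR N * x < IZR N) by (rewrite <- (Rmult_1_r (IZR N)) at 2; apply Rmult_lt_compat_l; lra).
  split.
  - assert (-1 < IZR (Int_part (IZR N * x))) by lra.
    apply lt_IZR in H1. lia.
  - apply lt_IZR. lra.
Qed.

Lemma box_close (N : Z) x y : (0 < N)%Z ->
  Int_part (IZR N * x) = Int_part (IZR N * y) -> Rabs (x - y) < / IZR N.
Proof.
  intros HN E. destruct (ip_spec (IZR N * x)) as [h1 h2]. destruct (ip_spec (IZR N * y)) as [h3 h4].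
  rewrite E in h1, h2.
  assert (HN' : 0 < IZR N) by (apply IZR_lt; auto).
  assert (Rabs (IZR N * (x - y)) < 1) by (apply Rabs_def1; lra).
  rewrite Rabs_mult, Rabs_pos_eq in H by lra.
  apply Rmult_lt_reg_l with (IZR N); auto. rewrite Rinv_r; lra.
Qed.

Lemma dirichlet2 : forall b1 b2 rho, 0 < rho -> exists k m n : Z, k <> 0%Z /\
  Rabs (IZR k * b1 - IZR m) < rho /\ Rabs (IZR k * b2 - IZR n) < rho.
Proof.
  intros b1 b2 rho Hr.
  destruct (archimed (/ rho)) as [u1 _].
  set (N := up (/ rho)) in *.
  assert (Hir : 0 < / rho) by (apply Rinv_0_lt_compat; auto).
  assert (HN : (0 < N)%Z) by (apply lt_IZR; lra).
  assert (HNr : / IZR N < rho).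
  { apply Rmult_lt_reg_l with (IZR N). apply IZR_lt; auto. rewrite Rinv_r by (apply not_0_IZR; lia).
    apply Rmult_lt_reg_l with (/ rho); auto.
    replace (/ rho * (IZR N * rho)) with (IZR N) by (field; lra). lra. }
  set (bx := fun (i : nat) (b : R) => Int_part (IZR N * fpart (INR i * b))).
  set (v := fun i => (bx i b1 * N + bx i b2)%Z).
  assert (Hv : forall i, (0 <= v i < N * N)%Z).
  { intros i. unfold v. pose proof (box_bound N _ HN (fpart_spec (INR i * b1))).
    pose proof (box_bound N _ HN (fpart_spec (INR i * b2))). unfold bx. nia. }
  destruct (php (Z.to_nat (N * N)) (fun i => Z.to_nat (v i))) as [i [j [Hij [Hj E]]]].
  { intros i _. specialize (Hv i). lia. }
  pose proof (Hv i). pose proof (Hv j).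
  assert (E' : v i = v j) by lia.
  unfold v in E'.
  pose proof (box_bound N _ HN (fpart_spec (INR i * b1))).
  pose proof (box_bound N _ HN (fpart_spec (INR i * b2))).
  pose proof (box_bound N _ HN (fpart_spec (INR j * b1))).
  pose proof (box_bound N _ HN (fpart_spec (INR j * b2))).
  unfold bx in *.
  assert (Ea : Int_part (IZR N * fpart (INR j * b1)) = Int_part (IZR N * fpart (INR i * b1))) by nia.
  assert (Eb : Int_part (IZR N * fpart (INR j * b2)) = Int_part (IZR N * fpart (INR i * b2))) by nia.
  apply box_close in Ea; auto. apply box_close in Eb; auto.
  exists (Z.of_nat j - Z.of_nat i)%Z, (Int_part (INR j * b1) - Int_part (INR i * b1))%Z,
         (Int_part (INR j * b2) - Int_part (INR i * b2))%Z.
  split; [lia|]. unfold fpart in Ea, Eb. rewrite !minus_IZR, <- !INR_IZR_INZ.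
  split.
  - replace ((INR j - INR i) * b1 - (IZR (Int_part (INR j * b1)) - IZR (Int_part (INR i * b1))))
      with (INR j * b1 - IZR (Int_part (INR j * b1)) - (INR i * b1 - IZR (Int_part (INR i * b1)))) by ring.
    lra.
  - replace ((INR j - INR i) * b2 - (IZR (Int_part (INR j * b2)) - IZR (Int_part (INR i * b2))))
      with (INR j * b2 - IZR (Int_part (INR j * b2)) - (INR i * b2 - IZR (Int_part (INR i * b2)))) by ring.
    lra.
Qed.

Lemma dense2D (b1 b2 : R)
  (Hind : forall k m n : Z, k <> 0%Z -> forall p q : Z,
     IZR p * (IZR m - IZR k * b1) + IZR q * (IZR n - IZR k * b2) = 0 -> p = 0%Z /\ q = 0%Z) :
  forall z1 z2 eta, 0 < eta -> exists m n k : Z,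
    Rabs (IZR m - IZR k * b1 - z1) < eta /\ Rabs (IZR n - IZR k * b2 - z2) < eta.
Proof.
  intros z1 z2 eta He. set (rho := eta / 2).
  destruct (dirichlet2 b1 b2 rho ltac:(unfold rho; lra)) as [k0 [m0 [n0 [Hk [H1 H2]]]]].
  set (g1 := IZR m0 - IZR k0 * b1). set (g2 := IZR n0 - IZR k0 * b2).
  assert (Hg1 : Rabs g1 < rho) by (unfold g1; rewrite Rabs_minus_sym; auto).
  assert (Hg2 : Rabs g2 < rho) by (unfold g2; rewrite Rabs_minus_sym; auto).
  assert (Hi := Hind k0 m0 n0 Hk). fold g1 g2 in Hi.
  assert (g1nz : g1 <> 0).
  { intro E. destruct (Hi 1%Z 0%Z) as [e _]. rewrite E. ring. discriminate. }
  assert (Hi' : forall p q : Z, IZR p * g2 + IZR q * (- g1) = 0 -> p = 0%Z /\ q = 0%Z).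
  { intros p q E. destruct (Hi (- q)%Z p) as [e1 e2]. rewrite opp_IZR. lra. lia. }
  assert (Ht : 0 < rho * Rabs g1) by (apply Rmult_lt_0_compat; [unfold rho; lra| apply Rabs_pos_lt; auto]).
  destruct (K1_dense g2 (- g1) Hi' (g2 * z1 - g1 * z2) _ Ht) as [a [b Hab]].
  set (d1 := z1 - IZR a). set (d2 := z2 - IZR b).
  set (e := g2 * d1 - g1 * d2).
  assert (He' : Rabs e < rho * Rabs g1).
  { unfold e, d1, d2. rewrite <- Rabs_Ropp. replace (- (g2 * (z1 - IZR a) - g1 * (z2 - IZR b)))
      with (IZR a * g2 + IZR b * - g1 - (g2 * z1 - g1 * z2)) by ring. auto. }
  set (t := d1 / g1). set (j := Int_part t). destruct (ip_spec t) as [j1 j2]. fold j in j1, j2.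
  set (D := IZR j - t).
  assert (HD : Rabs D < 1) by (unfold D; apply Rabs_def1; lra).
  exists (a + j * m0)%Z, (b + j * n0)%Z, (j * k0)%Z.
  rewrite !plus_IZR, !mult_IZR.
  assert (E1 : IZR a + IZR j * IZR m0 - IZR j * IZR k0 * b1 - z1 = g1 * D).
  { unfold D, t, d1, g1. field. auto. }
  assert (E2 : IZR b + IZR j * IZR n0 - IZR j * IZR k0 * b2 - z2 = g2 * D + e / g1).
  { unfold D, t, e, d1, d2, g2, g1 in *. field. auto. }
  rewrite E1, E2. split.
  - rewrite Rabs_mult. assert (0 <= Rabs g1) by apply Rabs_pos.
    assert (Rabs g1 * Rabs D <= Rabs g1 * 1) by (apply Rmult_le_compat_l; lra). unfold rho in *; lra.
  - eapply Rle_lt_trans. apply Rabs_triang. rewrite Rabs_mult.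
    unfold Rdiv. rewrite Rabs_mult, Rabs_inv.
    assert (0 <= Rabs g2) by apply Rabs_pos.
    assert (Rabs g2 * Rabs D <= Rabs g2 * 1) by (apply Rmult_le_compat_l; lra).
    assert (Pg : 0 < Rabs g1) by (apply Rabs_pos_lt; auto).
    assert (Rabs e * / Rabs g1 < rho).
    { apply Rmult_lt_reg_r with (Rabs g1); auto. rewrite Rmult_assoc, Rinv_l by lra. lra. }
    unfold rho in *; lra.
Qed.

Lemma dist_ge1 p q : Rabs (fst p - fst q) <= dist2 p q.
Proof.
  unfold dist2. rewrite <- sqrt_Rsqr_abs. apply sqrt_le_1_alt. unfold Rsqr. 
  pose proof (pow2_ge_0 (snd p - snd q)). simpl. nra.
Qed.

Lemma dist_ge2 p q : Rabs (snd p - snd q) <= dist2 p q.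
Proof.
  unfold dist2. rewrite <- sqrt_Rsqr_abs. apply sqrt_le_1_alt. unfold Rsqr.
  pose proof (pow2_ge_0 (fst p - fst q)). simpl. nra.
Qed.

Lemma dist_le p q : dist2 p q <= Rabs (fst p - fst q) + Rabs (snd p - snd q).
Proof.
  unfold dist2. set (x := fst p - fst q). set (y := snd p - snd q).
  rewrite <- (sqrt_Rsqr (Rabs x + Rabs y)) by (pose proof (Rabs_pos x); pose proof (Rabs_pos y); lra).
  apply sqrt_le_1_alt. unfold Rsqr.
  pose proof (Rabs_pos x); pose proof (Rabs_pos y).
  assert (x ^ 2 = Rabs x * Rabs x) by (rewrite <- Rabs_mult; simpl; rewrite Rmult_1_r; rewrite Rabs_pos_eq; [ring| nra]).
  assert (y ^ 2 = Rabs y * Rabs y) by (rewrite <- Rabs_mult; simpl; rewrite Rmult_1_r; rewrite Rabs_pos_eq; [ring| nra]).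
  nra.
Qed.

Lemma dist_pos p q : 0 <= dist2 p q.
Proof. unfold dist2. apply sqrt_pos. Qed.

Lemma dist_snd_eq p q : snd p = snd q -> dist2 p q = Rabs (fst p - fst q).
Proof.
  intro E. unfold dist2. rewrite E. replace (snd q - snd q) with 0 by ring.
  rewrite <- sqrt_Rsqr_abs. f_equal. unfold Rsqr. simpl. ring.
Qed.

Definition aff (a1 a2 a3 b1 b2 b3 : R) (p : pt) : pt :=
  (a1 * fst p + a2 * snd p + a3, b1 * fst p + b2 * snd p + b3).

Lemma aff_lip a1 a2 a3 b1 b2 b3 p q :
  dist2 (aff a1 a2 a3 b1 b2 b3 p) (aff a1 a2 a3 b1 b2 b3 q) <=
  (Rabs a1 + Rabs a2 + Rabs b1 + Rabs b2) * dist2 p q.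
Proof.
  eapply Rle_trans. apply dist_le. unfold aff; simpl.
  replace (a1 * fst p + a2 * snd p + a3 - (a1 * fst q + a2 * snd q + a3))
    with (a1 * (fst p - fst q) + a2 * (snd p - snd q)) by ring.
  replace (b1 * fst p + b2 * snd p + b3 - (b1 * fst q + b2 * snd q + b3))
    with (b1 * (fst p - fst q) + b2 * (snd p - snd q)) by ring.
  pose proof (dist_ge1 p q). pose proof (dist_ge2 p q).
  pose proof (Rabs_triang (a1 * (fst p - fst q)) (a2 * (snd p - snd q))).
  pose proof (Rabs_triang (b1 * (fst p - fst q)) (b2 * (snd p - snd q))).
  rewrite !Rabs_mult in *.
  pose proof (Rabs_pos a1). pose proof (Rabs_pos a2). pose proof (Rabs_pos b1). pose proof (Rabs_pos b2).
  assert (Rabs a1 * Rabs (fst p - fst q) <= Rabs a1 * dist2 p q) by (apply Rmult_le_compat_l; auto).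
  assert (Rabs a2 * Rabs (snd p - snd q) <= Rabs a2 * dist2 p q) by (apply Rmult_le_compat_l; auto).
  assert (Rabs b1 * Rabs (fst p - fst q) <= Rabs b1 * dist2 p q) by (apply Rmult_le_compat_l; auto).
  assert (Rabs b2 * Rabs (snd p - snd q) <= Rabs b2 * dist2 p q) by (apply Rmult_le_compat_l; auto).
  lra.
Qed.

Lemma aff_cont A a1 a2 a3 b1 b2 b3 : cont_on A (aff a1 a2 a3 b1 b2 b3).
Proof.
  intros p _ e He. set (L := Rabs a1 + Rabs a2 + Rabs b1 + Rabs b2 + 1).
  assert (HL : 0 < L) by (unfold L; pose proof (Rabs_pos a1); pose proof (Rabs_pos a2);
    pose proof (Rabs_pos b1); pose proof (Rabs_pos b2); lra).
  exists (e / L). split. apply Rdiv_lt_0_compat; auto.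
  intros q _ Hq. eapply Rle_lt_trans. apply aff_lip.
  pose proof (dist_pos p q).
  apply Rle_lt_trans with (L * dist2 p q).
  - apply Rmult_le_compat_r; auto. unfold L; lra.
  - apply Rmult_lt_reg_l with (/ L). apply Rinv_0_lt_compat; auto.
    rewrite <- Rmult_assoc, Rinv_l, Rmult_1_l by lra.
    replace (/ L * e) with (e / L) by (unfold Rdiv; ring). auto.
Qed.

Definition seg (p q : pt) (t : R) : pt :=
  (fst p + t * (fst q - fst p), snd p + t * (snd q - snd p)).

Lemma seg0 p q : seg p q 0 = p.
Proof. destruct p; unfold seg; simpl; f_equal; ring. Qed.
Lemma seg1 p q : seg p q 1 = q.
Proof. destruct p, q; unfold seg; simpl; f_equal; ring. Qed.

Lemma seg_lip p q t t' : dist2 (seg p q t) (seg p q t') <=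
  Rabs (t - t') * (Rabs (fst q - fst p) + Rabs (snd q - snd p)).
Proof.
  eapply Rle_trans. apply dist_le. unfold seg; simpl.
  replace (fst p + t * (fst q - fst p) - (fst p + t' * (fst q - fst p))) with ((t - t') * (fst q - fst p)) by ring.
  replace (snd p + t * (snd q - snd p) - (snd p + t' * (snd q - snd p))) with ((t - t') * (snd q - snd p)) by ring.
  rewrite !Rabs_mult. lra.
Qed.

Lemma seg_close p q t t' d : 0 < d ->
  Rabs (t - t') < d / (Rabs (fst q - fst p) + Rabs (snd q - snd p) + 1) ->
  dist2 (seg p q t) (seg p q t') < d.
Proof.
  intros Hd H. set (M := Rabs (fst q - fst p) + Rabs (snd q - snd p)) in *.
  assert (HM : 0 <= M) by (unfold M; pose proof (Rabs_pos (fst q - fst p)); pose proof (Rabs_pos (snd q - snd p)); lra).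
  eapply Rle_lt_trans. apply seg_lip. fold M.
  pose proof (Rabs_pos (t - t')).
  apply Rle_lt_trans with (Rabs (t - t') * (M + 1)). apply Rmult_le_compat_l; lra.
  apply Rmult_lt_reg_r with (/ (M + 1)). apply Rinv_0_lt_compat; lra.
  rewrite Rmult_assoc, Rinv_r, Rmult_1_r by lra. auto.
Qed.

Lemma segment_lemma (K U V : pt -> Prop) b p :
  open2 U -> open2 V ->
  (forall x, K x -> U x \/ V x) -> (forall x, ~ (K x /\ U x /\ V x)) ->
  (forall t, 0 <= t <= 1 -> K (seg b p t)) -> U b -> U p.
Proof.
  intros HU HV Hcov Hdis Hseg Hb.
  set (M1 := Rabs (fst p - fst b) + Rabs (snd p - snd b) + 1).
  assert (HM1 : 0 < M1) by (unfold M1; pose proof (Rabs_pos (fst p - fst b)); pose proof (Rabs_pos (snd p - snd b)); lra).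
  set (E := fun t => 0 <= t <= 1 /\ forall t', 0 <= t' <= t -> U (seg b p t')).
  assert (E0 : E 0).
  { split. lra. intros t' Ht'. replace t' with 0 by lra. rewrite seg0. auto. }
  assert (Hbd : bound E) by (exists 1; intros t [Ht _]; lra).
  destruct (completeness E Hbd (ex_intro _ 0 E0)) as [tau [Hub Hlub]].
  assert (tau0 : 0 <= tau) by (apply Hub; auto).
  assert (tau1 : tau <= 1) by (apply Hlub; intros t [Ht _]; lra).
  assert (below : forall t', 0 <= t' < tau -> U (seg b p t')).
  { intros t' Ht'. apply NNPP; intro Hn.
    assert (tau <= t').
    { apply Hlub. intros t Et. destruct (Rle_lt_dec t t') as [h|h]; auto.
      exfalso. apply Hn. destruct Et as [_ Et]. apply Et. lra. }
    lra. }
  assert (Utau : U (seg b p tau)).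
  { destruct (Hcov _ (Hseg tau (conj tau0 tau1))) as [h|h]; auto.
    exfalso. destruct (HV _ h) as [d [Hd Hball]].
    destruct (Rlt_le_dec 0 tau) as [tp|tz].
    - set (t' := Rmax 0 (tau - d / M1 / 2)).
      assert (Ht' : 0 <= t' < tau).
      { unfold t'. split. apply Rmax_l. apply Rmax_lub_lt; auto.
        assert (0 < d / M1 / 2) by (apply Rdiv_lt_0_compat; [apply Rdiv_lt_0_compat|]; lra). lra. }
      assert (Vt : V (seg b p t')).
      { apply Hball. apply seg_close; auto. fold M1.
        assert (0 < d / M1) by (apply Rdiv_lt_0_compat; lra).
        assert (tau - d / M1 / 2 <= t') by (unfold t'; apply Rmax_r).
        apply Rabs_def1; lra. }
      apply (Hdis (seg b p t')). split; [apply Hseg; lra| split; [apply below; auto| auto]].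
    - assert (tau = 0) by lra. subst tau. rewrite seg0 in h.
      apply (Hdis b). split; [rewrite <- (seg0 b p); apply Hseg; lra| split; auto].
  }
  destruct (Rle_lt_or_eq_dec _ _ tau1) as [tl|te].
  - exfalso. destruct (HU _ Utau) as [d [Hd Hball]].
    set (t2 := Rmin 1 (tau + d / M1 / 2)).
    assert (0 < d / M1 / 2) by (apply Rdiv_lt_0_compat; [apply Rdiv_lt_0_compat|]; lra).
    assert (Ht2 : tau < t2) by (unfold t2; apply Rmin_glb_lt; lra).
    assert (E t2).
    { split. split; [lra| unfold t2; apply Rmin_l].
      intros t' Ht'. destruct (Rlt_le_dec t' tau) as [h|h]. apply below; lra.
      apply Hball. apply seg_close; auto. fold M1.
      assert (t2 <= tau + d / M1 / 2) by (unfold t2; apply Rmin_r).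
      apply Rabs_def1; lra. }
    assert (t2 <= tau) by (apply Hub; auto). lra.
  - rewrite te in Utau. rewrite seg1 in Utau. auto.
Qed.

Definition convex (K : pt -> Prop) := forall p q, K p -> K q -> forall t, 0 <= t <= 1 -> K (seg p q t).

Lemma convex_connected K : convex K -> connected2 K.
Proof.
  intros HK U V HU HV Hcov Hdis.
  destruct (classic (forall x, K x -> U x)) as [h|h]; [left; auto|].
  right. apply not_all_ex_not in h. destruct h as [x0 h]. apply imply_to_and in h. destruct h as [Kx0 nU].
  assert (V x0) by (destruct (Hcov x0 Kx0); tauto).
  apply NNPP; intro h. apply not_all_ex_not in h. destruct h as [b h]. apply imply_to_and in h. destruct h as [Kb nV].
  assert (U b) by (destruct (Hcov b Kb); tauto).
  apply nU. apply (segment_lemma K U V b x0); auto.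
Qed.

Definition Xf th (m n : Z) := IZR m * cos th - IZR n * sin th.
Definition Yf th (m n : Z) := IZR m * sin th + IZR n * cos th.
Definition Aset th eps s (r : R) := exists m n k : Z,
  0 <= Yf th m n < eps /\ r = Xf th m n - IZR k / s.
Definition cl1 (A : R -> Prop) r := forall e, 0 < e -> exists a, A a /\ Rabs (r - a) < e.
Definition fs s (p : pt) := fst p - snd p / s.

Lemma Q2R_frac (a w : Z) : w <> 0%Z -> exists q : Q, Q2R q = IZR a / IZR w.
Proof.
  intro Hw. exists (Qmake (a * w) (Z.to_pos (w * w))). unfold Q2R; simpl.
  rewrite Z2Pos.id by nia. rewrite !mult_IZR. field. apply not_0_IZR; auto.
Qed.

Section Trig.
Variable th : R.
Hypothesis Htan : ~ exists q : Q, tan th = Q2R q.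

Lemma cos_nz : cos th <> 0.
Proof.
  intro E. apply Htan. exists 0%Q. unfold tan, Rdiv. rewrite E, Rinv_0. unfold Q2R; simpl. ring.
Qed.

Lemma irr (a b : Z) : IZR a * cos th + IZR b * sin th = 0 -> a = 0%Z /\ b = 0%Z.
Proof.
  intro E. pose proof cos_nz as Hc.
  destruct (Z.eq_dec b 0) as [Hb|Hb].
  - subst b. split; auto. assert (IZR a * cos th = 0) by (simpl in E; lra).
    apply Rmult_integral in H. destruct H; [apply eq_IZR; auto| contradiction].
  - exfalso. apply Htan. destruct (Q2R_frac (- a) b Hb) as [q Hq]. exists q. rewrite Hq.
    unfold tan. rewrite opp_IZR. assert (IZR b <> 0) by (apply not_0_IZR; auto).
    apply Rmult_eq_reg_r with (IZR b * cos th). 2: { apply Rmult_integral_contrapositive; auto. }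
    field_simplify; auto. lra.
Qed.
End Trig.

Section LL.
Variables th eps s : R.
Hypothesis Hs : s <> 0.

Lemma LL_iff p : LambdaLine th eps s p <-> Aset th eps s (fs s p).
Proof.
  split.
  - intros [q [t [[m [n [k [Hw ->]]]] ->]]]. exists m, n, k. split. exact Hw.
    unfold fs, Xf; simpl. field. auto.
  - intros [m [n [k [Hw Hr]]]]. unfold fs in Hr.
    exists (Xf th m n, IZR k), ((snd p - IZR k) / s). split.
    + exists m, n, k. split. exact Hw. reflexivity.
    + destruct p as [p1 p2]; simpl in *. f_equal.
      * unfold Xf in *. apply Rplus_eq_reg_r with (- (p2 / s)). rewrite Hr at 1. field. auto.
      * field. auto.
Qed.

Lemma fs_lip p q : Rabs (fs s p - fs s q) <= (1 + / Rabs s) * dist2 p q.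
Proof.
  unfold fs. replace (fst p - snd p / s - (fst q - snd q / s)) with ((fst p - fst q) + (snd p - snd q) * (- / s))
    by (field; auto).
  eapply Rle_trans. apply Rabs_triang. rewrite Rabs_mult, Rabs_Ropp, Rabs_inv.
  pose proof (dist_ge1 p q). pose proof (dist_ge2 p q).
  assert (0 < / Rabs s) by (apply Rinv_0_lt_compat, Rabs_pos_lt; auto).
  assert (Rabs (snd p - snd q) * / Rabs s <= dist2 p q * / Rabs s) by (apply Rmult_le_compat_r; lra).
  rewrite Rmult_plus_distr_r, Rmult_1_l, (Rmult_comm (/ Rabs s)). lra.
Qed.

Lemma fs_close p q d : 0 < d -> dist2 p q < d / (1 + / Rabs s) -> Rabs (fs s p - fs s q) < d.
Proof.
  intros Hd H. assert (HL : 0 < 1 + / Rabs s) by (assert (0 < / Rabs s) by (apply Rinv_0_lt_compat, Rabs_pos_lt; auto); lra).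
  eapply Rle_lt_trans. apply fs_lip.
  apply Rmult_lt_compat_l with (r := 1 + / Rabs s) in H; auto.
  set (L := 1 + / Rabs s) in *. replace (L * (d / L)) with d in H by (field; lra). auto.
Qed.

Lemma closure_iff x : closure2 (LambdaLine th eps s) x <-> cl1 (Aset th eps s) (fs s x).
Proof.
  assert (HL : 0 < 1 + / Rabs s) by (assert (0 < / Rabs s) by (apply Rinv_0_lt_compat, Rabs_pos_lt; auto); lra).
  split.
  - intros H e He. destruct (H (e / (1 + / Rabs s))) as [y [Ly Hy]]. apply Rdiv_lt_0_compat; auto.
    exists (fs s y). split. apply LL_iff; auto. apply fs_close; auto.
  - intros H e He. destruct (H e He) as [a [Aa Ha]].
    exists (fst x - (fs s x - a), snd x). split.
    + apply LL_iff. unfold fs in *; simpl. replace (fst x - (fst x - snd x / s - a) - snd x / s) with a by ring. auto.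
    + rewrite dist_snd_eq by reflexivity. simpl. replace (fst x - (fst x - (fs s x - a))) with (fs s x - a) by ring. auto.
Qed.

Lemma dense_of : (forall r, cl1 (Aset th eps s) r) -> dense2 (LambdaLine th eps s).
Proof. intros H x. apply closure_iff. apply H. Qed.
End LL.

Lemma sc1 th : sin th * sin th + cos th * cos th = 1.
Proof. pose proof (sin2_cos2 th). unfold Rsqr in H. lra. Qed.

Lemma abs_mul_le1 x c : -1 <= c <= 1 -> Rabs (x * c) <= Rabs x.
Proof.
  intro Hc. rewrite Rabs_mult. assert (Rabs c <= 1) by (apply Rabs_le; lra).
  pose proof (Rabs_pos x). pose proof (Rabs_pos c). nra.
Qed.

Section PartII.
Variables th eps s : R.
Hypothesis Htan : ~ exists q : Q, tan th = Q2R q.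
Hypothesis Heps : 0 < eps.
Hypothesis Hs : s <> 0.
Hypothesis Hns : ~ in_Qspan th s.

Lemma partII : forall r, cl1 (Aset th eps s) r.
Proof.
  set (c := cos th). set (sn := sin th). set (al := / s).
  assert (Hal : al <> 0) by (apply Rinv_neq_0_compat; auto).
  assert (Hind : forall k m n : Z, k <> 0%Z -> forall p q : Z,
     IZR p * (IZR m - IZR k * (al * c)) + IZR q * (IZR n - IZR k * (- (al * sn))) = 0 -> p = 0%Z /\ q = 0%Z).
  { intros k m n Hk p q E.
    destruct (Req_dec (IZR p * c - IZR q * sn) 0) as [E0|E0].
    - destruct (irr th Htan p (- q)) as [h1 h2]. rewrite opp_IZR. unfold c, sn in E0. lra. lia.
    - exfalso. set (w := (p * m + q * n)%Z).
      assert (Ew : IZR w = IZR k * al * (IZR p * c - IZR q * sn)) by (unfold w; rewrite plus_IZR, !mult_IZR; lra).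
      assert (Hk' : IZR k <> 0) by (apply not_0_IZR; auto).
      assert (Hw : w <> 0%Z).
      { intro h. rewrite h in Ew. symmetry in Ew. apply Rmult_integral in Ew. destruct Ew as [h'|h']; [|auto].
        apply Rmult_integral in h'. destruct h'; auto. }
      assert (Hw' : IZR w <> 0) by (apply not_0_IZR; auto).
      apply Hns. destruct (Q2R_frac (k * p) w Hw) as [q1 Hq1]. destruct (Q2R_frac (- (k * q)) w Hw) as [q2 Hq2].
      exists q1, q2. rewrite Hq1, Hq2. rewrite opp_IZR, !mult_IZR. fold c sn.
      unfold al in Ew.
      assert (Ew2 : s * IZR w = IZR k * (IZR p * c - IZR q * sn)) by (rewrite Ew; field; auto).
      apply Rmult_eq_reg_r with (IZR w); auto. rewrite Ew2. field. auto. }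
  intros r e He.
  set (eta := Rmin e (eps / 2) / 2).
  assert (Heta : 0 < eta) by (unfold eta; assert (0 < Rmin e (eps/2)) by (apply Rmin_glb_lt; lra); lra).
  destruct (dense2D (al * c) (- (al * sn)) Hind (r * c + eps / 2 * sn) (- r * sn + eps / 2 * c) eta Heta)
    as [m [n [k [H1 H2]]]].
  exists (Xf th m n - IZR k / s). split.
  - exists m, n, k. split; [|reflexivity].
    assert (EY : Yf th m n - eps / 2 = (IZR m - IZR k * (al * c) - (r * c + eps / 2 * sn)) * sn
       + (IZR n - IZR k * - (al * sn) - (- r * sn + eps / 2 * c)) * c).
    { unfold Yf. fold c sn. pose proof (sc1 th). fold c sn in H. 
      replace (eps / 2) with (eps / 2 * (sn * sn + c * c)) at 1 by (rewrite H; ring). ring. }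
    pose proof (abs_mul_le1 (IZR m - IZR k * (al * c) - (r * c + eps / 2 * sn)) sn (SIN_bound th)).
    pose proof (abs_mul_le1 (IZR n - IZR k * - (al * sn) - (- r * sn + eps / 2 * c)) c (COS_bound th)).
    pose proof (Rabs_triang ((IZR m - IZR k * (al * c) - (r * c + eps / 2 * sn)) * sn)
       ((IZR n - IZR k * - (al * sn) - (- r * sn + eps / 2 * c)) * c)).
    rewrite <- EY in H3.
    assert (eta <= eps / 4) by (unfold eta; pose proof (Rmin_r e (eps/2)); lra).
    assert (Rabs (Yf th m n - eps / 2) < eps / 2) by lra.
    apply Rabs_def2 in H5. lra.
  - assert (EX : r - (Xf th m n - IZR k / s) = - ((IZR m - IZR k * (al * c) - (r * c + eps / 2 * sn)) * c
       - (IZR n - IZR k * - (al * sn) - (- r * sn + eps / 2 * c)) * sn)).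
    { unfold Xf. fold c sn. pose proof (sc1 th). fold c sn in H. unfold al.
      replace (IZR k / s) with (IZR k / s * (sn * sn + c * c)) by (rewrite H; ring).
      replace r with (r * (sn * sn + c * c)) at 1 by (rewrite H; ring). field. auto. }
    rewrite EX, Rabs_Ropp.
    pose proof (abs_mul_le1 (IZR m - IZR k * (al * c) - (r * c + eps / 2 * sn)) c (COS_bound th)).
    pose proof (abs_mul_le1 (IZR n - IZR k * - (al * sn) - (- r * sn + eps / 2 * c)) sn (SIN_bound th)).
    pose proof (Rabs_triang ((IZR m - IZR k * (al * c) - (r * c + eps / 2 * sn)) * c)
       (- ((IZR n - IZR k * - (al * sn) - (- r * sn + eps / 2 * c)) * sn))).
    rewrite Rabs_Ropp in H3.
    assert (eta <= e / 2) by (unfold eta; pose proof (Rmin_l e (eps/2)); lra).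
    unfold Rminus at 1. lra.
Qed.
End PartII.

Lemma min_pos (P : Z -> Prop) : (exists j, P j /\ (0 < j)%Z) ->
  exists g, P g /\ (0 < g)%Z /\ forall j, P j -> (0 < j)%Z -> (g <= j)%Z.
Proof.
  intros [j0 [P0 H0]]. apply NNPP. intro H.
  assert (forall n : nat, forall j, P j -> (0 < j)%Z -> (j <= Z.of_nat n)%Z -> False).
  { induction n as [|n IH]; intros j Pj Hj Hjn. lia.
    destruct (Z_le_gt_dec j (Z.of_nat n)) as [h|h]. eapply IH; eauto.
    apply H. exists j. repeat split; auto. intros j' Pj' Hj'.
    destruct (Z_le_gt_dec j j') as [h'|h']; auto. exfalso. eapply IH; eauto. lia. }
  apply (H1 (Z.to_nat j0) j0); auto. lia.
Qed.

Lemma abs_le_inv x a : Rabs x <= a -> - a <= x <= a.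
Proof. unfold Rabs; destruct (Rcase_abs x); intros; lra. Qed.

Section PartI.
Variables th eps s : R.
Hypothesis Htan : ~ exists q : Q, tan th = Q2R q.
Hypothesis Heps : 0 < eps.
Hypothesis Hs : s <> 0.
Variables p1 p2 q : Z.
Hypothesis Hq : q <> 0%Z.
Hypothesis Hspan : IZR q * s = IZR p1 * cos th + IZR p2 * sin th.

Definition Xv := IZR q * s.
Definition Yv := IZR p1 * sin th - IZR p2 * cos th.
Definition phi (m n k : Z) := (p1 * m - p2 * n - q * k)%Z.

Lemma key_id m n k : Xv * (Xf th m n - IZR k / s) + Yv * Yf th m n = IZR (phi m n k).
Proof.
  unfold phi. rewrite !minus_IZR, !mult_IZR.
  transitivity (IZR q * s * Xf th m n - IZR q * IZR k + Yv * Yf th m n).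
  { unfold Xv. field. auto. }
  rewrite Hspan. unfold Yv, Xf, Yf. pose proof (sc1 th).
  transitivity ((IZR p1 * IZR m - IZR p2 * IZR n) * (sin th * sin th + cos th * cos th) - IZR q * IZR k).
  ring. rewrite H. ring.
Qed.

Lemma Xv_nz : Xv <> 0.
Proof. unfold Xv. apply Rmult_integral_contrapositive. split; auto. apply not_0_IZR; auto. Qed.

Lemma Yv_nz : Yv <> 0.
Proof.
  intro E. destruct (irr th Htan (- p2) p1) as [h1 h2]. unfold Yv in E. rewrite opp_IZR. lra.
  apply Xv_nz. unfold Xv. rewrite Hspan. assert (p1 = 0%Z) by lia. assert (p2 = 0%Z) by lia. rewrite H, H0. simpl. ring.
Qed.

Definition J j := exists m n k, j = phi m n k.

Lemma J_sub j1 j2 t : J j1 -> J j2 -> J (j1 - t * j2)%Z.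
Proof. intros [m [n [k ->]]] [m' [n' [k' ->]]]. exists (m - t * m')%Z, (n - t * n')%Z, (k - t * k')%Z.
  unfold phi. ring. Qed.

Lemma J0 : J 0. Proof. exists 0%Z, 0%Z, 0%Z. unfold phi. ring. Qed.

Lemma J_pos : exists j, J j /\ (0 < j)%Z.
Proof.
  destruct (Z_lt_le_dec 0 q).
  - exists q. split; [|lia]. exists 0%Z, 0%Z, (-1)%Z. unfold phi. ring.
  - exists (- q)%Z. split; [|lia]. exists 0%Z, 0%Z, 1%Z. unfold phi. ring.
Qed.

Definition gg := proj1_sig (constructive_indefinite_description _ (min_pos J J_pos)).
Lemma gg_spec : J gg /\ (0 < gg)%Z /\ forall j, J j -> (0 < j)%Z -> (gg <= j)%Z.
Proof. unfold gg. destruct (constructive_indefinite_description _ _). simpl. auto. Qed.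

Lemma J_div j : J j -> exists i, j = (gg * i)%Z.
Proof.
  intro Jj. destruct gg_spec as [Jg [Pg Mg]].
  exists (j / gg)%Z. pose proof (Z.div_mod j gg ltac:(lia)). pose proof (Z.mod_pos_bound j gg Pg).
  destruct (Z.eq_dec (j mod gg) 0) as [h|h]. lia.
  exfalso. assert (J (j mod gg)). { replace (j mod gg)%Z with (j - (j / gg) * gg)%Z by lia. apply J_sub; auto. }
  specialize (Mg _ H1 ltac:(lia)). lia.
Qed.

Lemma J_mul i : J (gg * i).
Proof. destruct gg_spec as [Jg _]. replace (gg * i)%Z with (0 - (- i) * gg)%Z by ring. apply J_sub; auto. apply J0. Qed.

Definition u := IZR gg / Xv.
Definition kap := - Yv / Xv.

Lemma kap_nz : kap <> 0.
Proof. unfold kap. pose proof Xv_nz. pose proof Yv_nz. intro E. unfold Rdiv in E.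
  apply Rmult_integral in E. destruct E as [E|E]. lra. apply Rinv_neq_0_compat in H; auto. Qed.

Lemma u_nz : u <> 0.
Proof. unfold u. pose proof Xv_nz. destruct gg_spec as [_ [Pg _]].
  assert (IZR gg <> 0) by (apply not_0_IZR; lia). unfold Rdiv. apply Rmult_integral_contrapositive.
  split; auto. apply Rinv_neq_0_compat; auto. Qed.

Lemma form_of m n k : Xf th m n - IZR k / s = (IZR (phi m n k) - Yv * Yf th m n) / Xv.
Proof. rewrite <- key_id. field; repeat split; auto using Xv_nz. Qed.

Lemma A_form a : Aset th eps s a -> exists i y, 0 <= y < eps /\ a = u * IZR i + kap * y.
Proof.
  intros [m [n [k [Hy ->]]]]. destruct (J_div (phi m n k)) as [i Hi]. exists m, n, k; auto.
  exists i, (Yf th m n). split; auto. rewrite form_of, Hi, mult_IZR. unfold u, kap. field; repeat split; auto using Xv_nz.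
Qed.

Lemma A_dense_pt i y : 0 <= y <= eps -> cl1 (Aset th eps s) (u * IZR i + kap * y).
Proof.
  intros Hy de Hde.
  destruct (J_mul i) as [m0 [n0 [k0 H0]]].
  set (dl := de / (Rabs kap + 1)).
  assert (Hdl : 0 < dl) by (unfold dl; apply Rdiv_lt_0_compat; auto; pose proof (Rabs_pos kap); lra).
  set (d := Rmin (dl / 2) (eps / 4)).
  assert (Hd : 0 < d) by (unfold d; apply Rmin_glb_lt; lra).
  assert (Hd1 : d <= dl / 2) by apply Rmin_l. assert (Hd2 : d <= eps / 4) by apply Rmin_r.
  set (t := if Rlt_dec y (eps / 2) then y + d else y - d).
  assert (Ht : d <= t <= eps - d /\ Rabs (t - y) <= d).
  { unfold t. destruct (Rlt_dec y (eps / 2)); split; try split; try (apply Rabs_le; lra); lra. }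
  assert (Hind : forall p r : Z, IZR p * (IZR q * sin th) + IZR r * (IZR q * cos th) = 0 -> p = 0%Z /\ r = 0%Z).
  { intros p r E. destruct (irr th Htan r p) as [h1 h2]; auto.
    assert (IZR q * (IZR r * cos th + IZR p * sin th) = 0) by lra.
    apply Rmult_integral in H. destruct H as [H|H]; auto. exfalso; apply Hq; apply eq_IZR; auto. }
  destruct (K1_dense _ _ Hind (t - Yf th m0 n0) (d / 2) ltac:(lra)) as [M [N HMN]].
  set (m' := (m0 + q * M)%Z). set (n' := (n0 + q * N)%Z). set (k' := (k0 + p1 * M - p2 * N)%Z).
  assert (EY : Yf th m' n' = Yf th m0 n0 + (IZR M * (IZR q * sin th) + IZR N * (IZR q * cos th))).
  { unfold Yf, m', n'. rewrite !plus_IZR, !mult_IZR. ring. }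
  assert (Ephi : phi m' n' k' = (gg * i)%Z) by (rewrite H0; unfold phi, m', n', k'; ring).
  assert (HY : Rabs (Yf th m' n' - t) < d / 2).
  { rewrite EY. replace (Yf th m0 n0 + (IZR M * (IZR q * sin th) + IZR N * (IZR q * cos th)) - t)
     with (IZR M * (IZR q * sin th) + IZR N * (IZR q * cos th) - (t - Yf th m0 n0)) by ring. auto. }
  apply Rabs_def2 in HY.
  exists (Xf th m' n' - IZR k' / s). split.
  - exists m', n', k'. split; [lra|reflexivity].
  - rewrite form_of, Ephi, mult_IZR.
    replace (u * IZR i + kap * y - (IZR gg * IZR i - Yv * Yf th m' n') / Xv) with (kap * (y - Yf th m' n'))
      by (unfold u, kap; field; repeat split; auto using Xv_nz).
    rewrite Rabs_mult.
    assert (Rabs (y - Yf th m' n') <= dl).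
    { apply Rabs_le. destruct Ht as [_ Ht]. apply abs_le_inv in Ht. lra. }
    pose proof (Rabs_pos kap).
    apply Rle_lt_trans with (Rabs kap * dl). apply Rmult_le_compat_l; auto.
    unfold dl. apply Rmult_lt_reg_r with (Rabs kap + 1). lra.
    replace (Rabs kap * (de / (Rabs kap + 1)) * (Rabs kap + 1)) with (Rabs kap * de) by (field; lra). nra.
Qed.

Definition gamma := Rabs u - Rabs kap * eps.

Lemma sep i i' y y' : 0 <= y <= eps -> 0 <= y' <= eps -> i <> i' ->
  gamma <= Rabs (u * IZR i + kap * y - (u * IZR i' + kap * y')).
Proof.
  intros Hy Hy' Hi.
  replace (u * IZR i + kap * y - (u * IZR i' + kap * y')) with (u * IZR (i - i') - (- (kap * (y - y'))))
    by (rewrite minus_IZR; ring).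
  eapply Rle_trans. 2: apply Rabs_triang_inv.
  rewrite Rabs_Ropp, !Rabs_mult. unfold gamma.
  assert (1 <= Rabs (IZR (i - i'))). { rewrite <- abs_IZR. apply IZR_le. lia. }
  assert (Rabs (y - y') <= eps) by (apply Rabs_le; lra).
  pose proof (Rabs_pos u). pose proof (Rabs_pos kap).
  assert (Rabs u <= Rabs u * Rabs (IZR (i - i'))) by nra.
  assert (Rabs kap * Rabs (y - y') <= Rabs kap * eps) by (apply Rmult_le_compat_l; auto).
  lra.
Qed.

Lemma dense_case : gamma <= 0 -> forall z, cl1 (Aset th eps s) z.
Proof.
  intros Hg z. pose proof kap_nz as Hk. pose proof u_nz as Hu.
  set (d := u / kap). set (w := z / kap).
  assert (Hd : Rabs d <= eps).
  { unfold d, Rdiv. rewrite Rabs_mult, Rabs_inv. unfold gamma in Hg.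
    assert (0 < Rabs kap) by (apply Rabs_pos_lt; auto).
    apply Rmult_le_reg_r with (Rabs kap); auto. rewrite Rmult_assoc, Rinv_l by lra. lra. }
  assert (dnz : d <> 0) by (unfold d, Rdiv; apply Rmult_integral_contrapositive; split; auto; apply Rinv_neq_0_compat; auto).
  destruct (ip_spec (w / d)) as [h1 h2].
  destruct (Rlt_le_dec 0 d) as [dp|dn].
  - set (i := Int_part (w / d)). fold i in h1, h2.
    assert (Ey : z = u * IZR i + kap * (d * (w / d - IZR i))) by (unfold d, w; field; auto).
    rewrite Ey. apply A_dense_pt.
    rewrite Rabs_pos_eq in Hd by lra. split; nra.
  - assert (dneg : d < 0) by lra.
    set (i := (Int_part (w / d) + 1)%Z).
    assert (Ey : z = u * IZR i + kap * (d * (w / d - IZR i))) by (unfold d, w; field; auto).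
    rewrite Ey. apply A_dense_pt.
    rewrite Rabs_left in Hd by lra. unfold i. rewrite plus_IZR. simpl. split; nra.
Qed.

Lemma cl_form (Hg : 0 < gamma) z : cl1 (Aset th eps s) z -> exists i y, 0 <= y <= eps /\ z = u * IZR i + kap * y.
Proof.
  intros Hz. pose proof kap_nz as Hk.
  destruct (Hz (gamma / 2) ltac:(lra)) as [a1 [A1 H1]].
  destruct (A_form a1 A1) as [i [y1 [Hy1 E1]]].
  exists i, ((z - u * IZR i) / kap). split; [| field; auto].
  set (y := (z - u * IZR i) / kap). apply NNPP. intro Hn.
  set (D := Rmax (- y) (y - eps)).
  assert (HD : 0 < D) by (unfold D; destruct (Rle_dec 0 y); [apply Rlt_le_trans with (y - eps); [lra|apply Rmax_r] | apply Rlt_le_trans with (- y); [lra|apply Rmax_l]]).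
  assert (HDy : forall y2, 0 <= y2 <= eps -> D <= Rabs (y - y2)).
  { intros y2 Hy2. unfold D. apply Rmax_lub; unfold Rabs; destruct (Rcase_abs (y - y2)); lra. }
  assert (Pk : 0 < Rabs kap) by (apply Rabs_pos_lt; auto).
  set (e' := Rmin (gamma / 2) (Rabs kap * D)).
  assert (He' : 0 < e') by (unfold e'; apply Rmin_glb_lt; [lra| apply Rmult_lt_0_compat; auto]).
  destruct (Hz e' He') as [a2 [A2 H2]].
  destruct (A_form a2 A2) as [i2 [y2 [Hy2 E2]]].
  destruct (Z.eq_dec i i2) as [Ei|Ei].
  - rewrite <- Ei in E2.
    assert (Ez : z - a2 = kap * (y - y2)) by (rewrite E2; unfold y; field; auto).
    rewrite Ez, Rabs_mult in H2.
    assert (Rabs kap * D <= Rabs kap * Rabs (y - y2)) by (apply Rmult_le_compat_l; [lra| apply HDy; lra]).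
    assert (e' <= Rabs kap * D) by apply Rmin_r. lra.
  - pose proof (sep i i2 y1 y2 ltac:(lra) ltac:(lra) Ei). rewrite <- E1, <- E2 in H.
    assert (e' <= gamma / 2) by apply Rmin_l.
    replace (a1 - a2) with ((z - a2) - (z - a1)) in H by ring.
    pose proof (Rabs_triang (z - a2) (- (z - a1))) as Ht. rewrite Rabs_Ropp in Ht.
    replace (z - a2 - (z - a1)) with (z - a2 + - (z - a1)) in H by ring. lra.
Qed.

Definition Ti i z := exists y, 0 <= y <= eps /\ z = u * IZR i + kap * y.

Lemma T_closure i x : Ti i (fs s x) -> closure2 (LambdaLine th eps s) x.
Proof. intros [y [Hy E]]. apply closure_iff; auto. rewrite E. apply A_dense_pt; auto. Qed.

Lemma S_convex i : convex (fun p => Ti i (fs s p)).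
Proof.
  intros p p' [y [Hy E]] [y' [Hy' E']] t Ht. exists (y + t * (y' - y)). split. nra.
  unfold fs, seg in *; simpl.
  replace (fst p + t * (fst p' - fst p) - (snd p + t * (snd p' - snd p)) / s)
    with ((fst p - snd p / s) + t * ((fst p' - snd p' / s) - (fst p - snd p / s))) by (field; auto).
  rewrite E, E'. ring.
Qed.

Lemma comp_sub (Hg : 0 < gamma) x i0 : Ti i0 (fs s x) ->
  forall p, component2 (closure2 (LambdaLine th eps s)) x p -> Ti i0 (fs s p).
Proof.
  intros Tx p [K [HK [KC [Kx Kp]]]].
  assert (HL : 0 < 1 + / Rabs s) by (assert (0 < / Rabs s) by (apply Rinv_0_lt_compat, Rabs_pos_lt; auto); lra).
  set (U := fun w => exists y, 0 <= y <= eps /\ Rabs (fs s w - (u * IZR i0 + kap * y)) < gamma / 2).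
  set (V := fun w => exists dl, 0 < dl /\ forall y, 0 <= y <= eps -> gamma / 2 + dl < Rabs (fs s w - (u * IZR i0 + kap * y))).
  assert (oU : open2 U).
  { intros z [y [Hy Hz]]. set (eta := gamma / 2 - Rabs (fs s z - (u * IZR i0 + kap * y))).
    exists (eta / (1 + / Rabs s)). split. apply Rdiv_lt_0_compat; unfold eta; lra.
    intros z' Hz'. exists y. split; auto. pose proof (fs_close s Hs z z' eta ltac:(unfold eta; lra) Hz').
    pose proof (Rabs_triang (fs s z' - fs s z) (fs s z - (u * IZR i0 + kap * y))).
    rewrite Rabs_minus_sym in H. replace (fs s z' - fs s z + (fs s z - (u * IZR i0 + kap * y))) with
      (fs s z' - (u * IZR i0 + kap * y)) in H0 by ring. unfold eta in *. lra. }
  assert (oV : open2 V).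
  { intros z [dl [Hdl Hz]]. exists ((dl / 2) / (1 + / Rabs s)). split. apply Rdiv_lt_0_compat; lra.
    intros z' Hz'. exists (dl / 2). split. lra. intros y Hy.
    pose proof (fs_close s Hs z z' (dl / 2) ltac:(lra) Hz'). specialize (Hz y Hy).
    pose proof (Rabs_triang (fs s z - fs s z') (fs s z' - (u * IZR i0 + kap * y))).
    replace (fs s z - fs s z' + (fs s z' - (u * IZR i0 + kap * y))) with
      (fs s z - (u * IZR i0 + kap * y)) in H0 by ring. lra. }
  assert (cov : forall z, K z -> U z \/ V z).
  { intros z Kz. apply KC in Kz. apply closure_iff in Kz; auto. destruct (cl_form Hg _ Kz) as [i' [y' [Hy' E']]].
    destruct (Z.eq_dec i' i0) as [Ei|Ei].
    - left. exists y'. split; auto. rewrite E', Ei. replace (u * IZR i0 + kap * y' - (u * IZR i0 + kap * y')) with 0 by ring.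
      rewrite Rabs_R0. lra.
    - right. exists (gamma / 4). split. lra. intros y Hy. rewrite E'. pose proof (sep i' i0 y' y Hy' Hy Ei). lra. }
  assert (dis : forall z, ~ (K z /\ U z /\ V z)).
  { intros z [_ [[y [Hy H1]] [dl [Hdl H2]]]]. specialize (H2 y Hy). lra. }
  assert (Ux : U x).
  { destruct Tx as [y [Hy E]]. exists y. split; auto. rewrite E.
    replace (u * IZR i0 + kap * y - (u * IZR i0 + kap * y)) with 0 by ring. rewrite Rabs_R0. lra. }
  destruct (HK U V oU oV cov dis) as [KU|KV].
  - destruct (KU p Kp) as [y [Hy Hp]]. pose proof (KC p Kp) as Cp. apply closure_iff in Cp; auto.
    destruct (cl_form Hg _ Cp) as [i' [y' [Hy' E']]].
    destruct (Z.eq_dec i' i0) as [Ei|Ei].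
    + exists y'. split; auto. rewrite E', Ei. reflexivity.
    + exfalso. pose proof (sep i' i0 y' y Hy' Hy Ei). rewrite <- E' in H. lra.
  - exfalso. apply (dis x). auto.
Qed.

Lemma homeo (Hg : 0 < gamma) x : closure2 (LambdaLine th eps s) x ->
  homeomorphic2 (component2 (closure2 (LambdaLine th eps s)) x) strip.
Proof.
  intro Cx. apply closure_iff in Cx; auto. destruct (cl_form Hg _ Cx) as [i0 [y0 [Hy0 E0]]].
  assert (Tx : Ti i0 (fs s x)) by (exists y0; auto).
  pose proof kap_nz as Hk.
  assert (Hke : kap * eps <> 0) by (apply Rmult_integral_contrapositive; split; lra).
  set (F := aff (/ (kap * eps)) (- / (s * kap * eps)) (- (u * IZR i0) / (kap * eps)) 0 1 0).
  set (G := aff (kap * eps) (/ s) (u * IZR i0) 0 1 0).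
  exists F, G. split; [|split; [|split; [|split; [|split]]]].
  - intros p Hp. destruct (comp_sub Hg x i0 Tx p Hp) as [y [Hy E]]. unfold strip, F, aff; simpl.
    unfold fs in E.
    replace (/ (kap * eps) * fst p + - / (s * kap * eps) * snd p + - (u * IZR i0) / (kap * eps)) with (y / eps).
    2: { apply Rmult_eq_reg_l with (kap * eps); auto.
         transitivity (kap * y). field; lra.
         transitivity (fst p - snd p / s - u * IZR i0). rewrite E; ring. field. repeat split; lra || auto. }
    split. apply Rmult_le_pos; [lra| left; apply Rinv_0_lt_compat; lra].
    apply Rmult_le_reg_r with eps; auto. unfold Rdiv. rewrite Rmult_assoc, Rinv_l; lra.
  - intros qq Hqq. exists (fun p => Ti i0 (fs s p)). split; [apply convex_connected, S_convex|].
    split; [intros z Tz; apply T_closure with i0; auto|]. split; auto.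
    exists (eps * fst qq). unfold strip in Hqq. split. nra.
    unfold G, aff, fs; simpl. field. auto.
  - intros p _. destruct p as [a b]. unfold F, G, aff; simpl. f_equal; [field; repeat split; lra || auto| ring].
  - intros qq _. destruct qq as [a b]. unfold F, G, aff; simpl. f_equal; [field; repeat split; lra || auto| ring].
  - apply aff_cont.
  - apply aff_cont.
Qed.

End PartI.

Theorem theorem1 (theta eps s : R)
  (Htan : ~ exists q : Q, tan theta = Q2R q)
  (Heps : 0 < eps) (Hs : s <> 0) :
  (in_Qspan theta s ->
     dense2 (LambdaLine theta eps s) \/
     (forall x, closure2 (LambdaLine theta eps s) x ->
        homeomorphic2 (component2 (closure2 (LambdaLine theta eps s)) x) strip)) /\
  (~ in_Qspan theta s -> dense2 (LambdaLine theta eps s)).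
Proof.
  split.
  - intros [a [b Hab]]. destruct a as [pa da], b as [pb db].
    set (q := (Z.pos da * Z.pos db)%Z). set (p1 := (pa * Z.pos db)%Z). set (p2 := (pb * Z.pos da)%Z).
    assert (Hq : q <> 0%Z) by (unfold q; lia).
    assert (Hspan : IZR q * s = IZR p1 * cos theta + IZR p2 * sin theta).
    { rewrite Hab. unfold Q2R, q, p1, p2. cbn [Qnum Qden]. rewrite !mult_IZR. field.
      split; apply not_0_IZR; lia. }
    destruct (Rle_dec (gamma theta eps s p1 p2 q Hq) 0) as [Hg|Hg].
    + left. apply dense_of; auto. apply (dense_case theta eps s Htan Heps Hs p1 p2 q Hq Hspan Hg).
    + right. apply (homeo theta eps s Htan Heps Hs p1 p2 q Hq Hspan). lra.
  - intros Hns. apply dense_of; auto. apply partII; auto.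
Qed.
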